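(* Let $K$ be a graph with a designated set of edges called virtual edges, let $\Sigma(K)$ be the set of distinct endpoint-pairs of its virtual edges, and let $A(K)$ be the set of vertices $v$ of $K$ such that $v$ is universal in $K$, $v$ is incident with a pair of parallel edges, and every virtual edge of $K$ is incident with $v$. If $K$ admits a half-edge $2$-colouring making it a W-cone in which every virtual edge is bichromatic, then the apex of every such W-cone colouring belongs to $A(K)$. Moreover: (1) if $|\Sigma(K)|\ge 2$, then $A(K)$ is a singleton; (2) if $\Sigma(K)=\{\{x,y\}\}$, then $A(K)\subseteq\{x,y\}$.
   Context: Graphs may have parallel edges but no loops. A vertex is universal if it is adjacent to all other vertices. A half-edge $2$-colouring $d$ assigns to each pair $(e,w)$ with $w$ an endpoint of edge $e$ a colour in $\{0,1\}$ (0 = blue, 1 = red). An edge $e=uv$ is bichromatic if $d(e,u)\neq d(e,v)$ and monochromatic otherwise; $E_b$, $E_m$ denote the bichromatic and monochromatic edge sets; standing convention: monochromatic edges are blue at both ends. A graph is matching-covered if every edge lies in some perfect matching. A W-cone is a half-edge $2$-coloured matching-covered graph $(K,d)$ containing a universal vertex $v$ (the apex) such that the set of edges incident with $v$ equals $E_b(K)$, $E(K-v)=E_m(K)$, and every vertex $u$ is incident with an edge $e$ with $d(e,u)=1$. *)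

(* Defs.v *)
From mathcomp Require Import all_boot.
Set Implicit Arguments. Unset Strict Implicit. Unset Printing Implicit Defensive.

(* A finite multigraph (parallel edges allowed): vertices V, edges E, each
   edge e has endpoints src e and tgt e.  Looplessness is a hypothesis
   ([loopless]) of the main theorem. *)
Section Graph.
Variables (V E : finType) (src tgt : E -> V).

Definition loopless : Prop := forall e, src e != tgt e.

Definition ends (e : E) : {set V} := [set src e; tgt e].

Definition incident (w : V) (e : E) : bool := w \in ends e.

Definition adjacent (u w : V) : Prop := exists e, ends e = [set u; w].

Definition universal (v : V) : Prop := forall u, u != v -> adjacent v u.

(* half-edge 2-colouring: d e w is the colour of the half-edge (e,w);
   only values at endpoints matter.  false = 0 = blue, true = 1 = red. *)
Definition colouring := E -> V -> bool.

Definition bichromatic (d : colouring) (e : E) : bool := d e (src e) != d e (tgt e).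
Definition monochromatic (d : colouring) (e : E) : bool := ~~ bichromatic d e.

Definition mono_blue (d : colouring) : Prop :=
  forall e, monochromatic d e -> d e (src e) = false /\ d e (tgt e) = false.

Definition perfect_matching (M : {set E}) : Prop :=
  forall w : V, #|[set e in M | incident w e]| = 1.

Definition matching_covered : Prop :=
  forall e : E, exists M : {set E}, perfect_matching M /\ e \in M.

Definition Wcone (d : colouring) (v : V) : Prop :=
  [/\ mono_blue d /\ matching_covered,
      universal v,
      (forall e, incident v e <-> bichromatic d e),
      (forall e, ~~ incident v e <-> monochromatic d e)
    & (forall u : V, exists e, incident u e /\ d e u = true)].

Definition Sigma (Virt : {set E}) : {set {set V}} := [set ends e | e in Virt].

Definition Aset (Virt : {set E}) : {set V} :=
  [set v | [&& [forall u, (u != v) ==> [exists e, ends e == [set v; u]]],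
              [exists e, exists f, [&& e != f, ends e == ends f & incident v e]]
            & [forall e in Virt, incident v e]]].

End Graph.

(* Main.v *)
Require Import Defs.
From mathcomp Require Import all_boot.

Section Aux.
Variables (V E : finType) (src tgt : E -> V).

Lemma key_other (d : colouring V E) e w : incident src tgt w e -> bichromatic src tgt d e ->
  exists u, [/\ u != w, ends src tgt e = [set w; u] & d e u = ~~ d e w].
Proof.
rewrite /incident /bichromatic /ends => /set2P [->|->] hb.
- exists (tgt e); split => //; last by move: hb; case: (d e (src e)); case: (d e (tgt e)).
  by apply: contraNneq hb => ->.
- exists (src e); split => //; first by apply: contraNneq hb => ->.
  by rewrite setUC.
  by move: hb; case: (d e (src e)); case: (d e (tgt e)).
Qed.

Lemma ends_two e v w : incident src tgt v e -> incident src tgt w e -> v != w ->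
  ends src tgt e = [set v; w].
Proof.
rewrite /incident /ends => /set2P [->|->] /set2P [->|->]; rewrite ?eqxx //.
by rewrite setUC.
Qed.

Lemma part1 (Virt : {set E}) (d : colouring V E) v :
  loopless src tgt -> Wcone src tgt d v ->
  (forall e, e \in Virt -> bichromatic src tgt d e) -> v \in Aset src tgt Virt.
Proof.
move=> hl [[hmb hmc] hu hinc hninc hred] hvirt.
rewrite inE; apply/and3P; split.
- apply/forallP=> u; apply/implyP=> huv; have [e he] := hu u huv.
  by apply/existsP; exists e; apply/eqP.
- have [e1 [hi1 hr1]] := hred v.
  have [u [huv he1 hdu]] := (@key_other d e1 v hi1 (proj1 (hinc e1) hi1)).
  rewrite hr1 /= in hdu.
  have [e2 [hi2 hr2]] := hred u.
  have hv2 : incident src tgt v e2.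
    apply/negPn/negP => /(hninc e2) /hmb [h1 h2].
    by move: hi2 hr2; rewrite /incident /ends => /set2P [->|->]; rewrite ?h1 ?h2.
  have [u' [hu'v he2 _]] := (@key_other d e2 v hv2 (proj1 (hinc e2) hv2)).
  apply/existsP; exists e1; apply/existsP; exists e2; rewrite hi1 andbT.
  apply/andP; split.
    by apply/eqP => E12; move: hr2; rewrite -E12 hdu.
  by rewrite he1 (@ends_two e2 v u hv2 hi2) // eq_sym.
- by apply/forallP => e; apply/implyP => /hvirt /(hinc e).
Qed.

Lemma Aset_inc (Virt : {set E}) w e : w \in Aset src tgt Virt -> e \in Virt ->
  incident src tgt w e.
Proof.
by rewrite inE => /and3P [_ _ /forallP /(_ e) /implyP]; apply.
Qed.

End Aux.
Arguments Aset_inc {V E src tgt Virt w e}.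
Arguments ends_two {V E src tgt e v w}.

Theorem mainTheorem17 (V E : finType) (src tgt : E -> V) (Virt : {set E}) :
  loopless src tgt ->
  (exists (d : colouring V E) (v : V),
      Wcone src tgt d v /\ (forall e, e \in Virt -> bichromatic src tgt d e)) ->
  [/\ (forall (d : colouring V E) (v : V),
         Wcone src tgt d v -> (forall e, e \in Virt -> bichromatic src tgt d e) ->
         v \in Aset src tgt Virt),
      (2 <= #|Sigma src tgt Virt| -> #|Aset src tgt Virt| = 1)
    & (forall x y : V, Sigma src tgt Virt = [set [set x; y]] ->
         Aset src tgt Virt \subset [set x; y])].
Proof.
move=> hl [d [v [hw hv]]].
have hvA := @part1 V E src tgt Virt d v hl hw hv.
split.
- by move=> d' v' hw' hv'; exact: (@part1 V E src tgt Virt d' v' hl hw' hv').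
- move=> /card_gt1P [s1 [s2 [/imsetP [e1 he1 ->] /imsetP [e2 he2 ->] hne]]].
  suff -> : Aset src tgt Virt = [set v] by rewrite cards1.
  apply/setP => w; rewrite in_set1; apply/idP/eqP => [hwA|->//].
  apply/eqP; apply/negPn/negP => hwv.
  have a1 := Aset_inc hvA he1; have a2 := Aset_inc hvA he2.
  have b1 := Aset_inc hwA he1; have b2 := Aset_inc hwA he2.
  by move: hne; rewrite (ends_two a1 b1) ?(ends_two a2 b2) ?eqxx // eq_sym.
- move=> x y hS; apply/subsetP => w hwA.
  have : [set x; y] \in Sigma src tgt Virt by rewrite hS in_set1.
  case/imsetP => e he ->.
  exact: Aset_inc hwA he.
Qed.
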